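(* Let $G=(V,E)$ be a finite graph and let $\underline{r}^G=(r_v)_{v\in V}\in\mathbb{Z}^{V}$. Let $H$ be an arbitrary $2$-cover of $G$, and let $G\cup G$ denote the disjoint union of two copies of $G$ (itself a $2$-cover of $G$). Let $\underline{r}$ denote the vector induced by $\underline{r}^G$ on $H$ and on $G\cup G$, i.e. each lift $u'$ of a vertex $u\in V$ gets value $r_{u'}=r_u$. Then $$\varepsilon_{\underline{r}}(G\cup G)\geq \varepsilon_{\underline{r}}(H).$$ In other words, for any $\underline{r}\in\mathbb{Z}^{V}$, among all $2$-covers $H$ of $G$ the quantity $\varepsilon_{\underline{r}}(H)$ is maximized by $G\cup G$.
   Context: A $2$-cover of $G$ is a graph with vertex set $V\times\{0,1\}$ obtained by choosing, for every edge $uv\in E$, either the pair of edges $(u,0)(v,0),(u,1)(v,1)$ or the pair $(u,0)(v,1),(u,1)(v,0)$, and having no other edges. For a graph $F$ and a vector $\underline{r}=(r_v)\in\mathbb{Z}^{V(F)}$, $\varepsilon_{\underline{r}}(F)$ denotes the number of orientations of $F$ in which every vertex $v$ has in-degree exactly $r_v$. *)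

(* Defs.v *)
From mathcomp Require Import all_boot all_order all_algebra.
Set Implicit Arguments. Unset Strict Implicit. Unset Printing Implicit Defensive.

Definition simple_graph (T : finType) (e : rel T) : Prop :=
  symmetric e /\ irreflexive e.

(* An orientation of the graph (T, h): a set d of ordered pairs (x,y),
   meaning "edge xy oriented from x to y", such that every ordered pair in d
   is an edge, and each edge {x,y} is oriented in exactly one direction. *)
Definition is_orientation (T : finType) (h : rel T) (d : {ffun T * T -> bool}) : bool :=
  [forall x, forall y, (d (x, y) ==> h x y) && (h x y ==> (d (x, y) != d (y, x)))].

Definition indeg (T : finType) (d : {ffun T * T -> bool}) (v : T) : nat :=
  #|[set u | d (u, v)]|.

Definition eps (T : finType) (h : rel T) (r : T -> int) : nat :=
  #|[set d : {ffun T * T -> bool} |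
      is_orientation h d && [forall v, Posz (indeg d v) == r v]]|.

Definition is_two_cover (V : finType) (e : rel V) (h : rel (V * bool)) : Prop :=
  symmetric h /\
  (forall x y : V * bool, h x y -> e x.1 y.1) /\
  (forall u v : V, e u v ->
     (h (u, false) (v, false) && h (u, true) (v, true)
      && ~~ h (u, false) (v, true) && ~~ h (u, true) (v, false))
     || (h (u, false) (v, true) && h (u, true) (v, false)
      && ~~ h (u, false) (v, false) && ~~ h (u, true) (v, true))).

Definition two_copies (V : finType) (e : rel V) : rel (V * bool) :=
  fun x y => e x.1 y.1 && (x.2 == y.2).

Definition lift_vec (V : finType) (r : V -> int) : V * bool -> int :=
  fun x => r x.1.

(* Main.v *)
Require Import Defs.
From mathcomp Require Import all_boot all_order all_algebra.
From mathcomp Require Import zify ring lra.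
Set Implicit Arguments. Unset Strict Implicit. Unset Printing Implicit Defensive.
Import Order.TTheory GRing.Theory Num.Theory.
Local Open Scope ring_scope.

Definition Symp (a : {poly int}) (n : nat) (s : int) :=
  (forall i, (i <= n)%N -> a`_(n - i) = s * a`_i) /\ (forall i, (n < i)%N -> a`_i = 0).

Lemma Symp1 : Symp 1 0 1.
Proof.
split=> [[|i]|[|i]] //= _; rewrite ?coef1 ?mul1r //.
Qed.

Lemma SympXs (a : {poly int}) n s (c : int) : s * s = 1 -> c * c = 1 ->
  Symp a n s -> Symp (('X + c%:P) * a) n.+1 (c * s).
Proof.
move=> ss cc [h1 h2]; have hcoef : forall i, (('X + c%:P) * a)`_i =
   (if i is j.+1 then a`_j else 0) + c * a`_i.
  by move=> i; rewrite mulrDl coefD coefXM coefCM; case: i.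
split=> [i hi|i hi]; last first.
  rewrite hcoef (h2 i); last by lia.
  case: i hi => [|j] hj; first by lia.
  rewrite (h2 j); last by lia.
  ring.
rewrite !hcoef.
case: i hi => [|j] hj.
  rewrite subn0 (h2 n.+1) // mulr0 addr0 add0r.
  have h := h1 n (leqnn n); rewrite subnn in h; rewrite h.
  by transitivity ((c*c)*(s*s)*a`_n); [rewrite cc ss !mul1r | ring].
have -> : (n.+1 - j.+1 = n - j)%N by lia.
rewrite h1; last by lia.
have [jn|jn] := ltnP j n.
  have -> : (n - j = (n - j.+1).+1)%N by lia.
  rewrite (h1 j.+1) //.
  by transitivity (s*a`_j.+1*(c*c) + c*(s*a`_j)); [rewrite cc mulr1 | ring].
have -> : j = n by lia.
rewrite subnn (h2 n.+1) // !mulr0 add0r addr0.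
by ring.
Qed.

Lemma sgn_sq (t : nat) : (-1) ^+ t * (-1) ^+ t = 1 :> int.
Proof. by rewrite -expr2 sqrr_sign. Qed.

Lemma SympPow p m : Symp (('X + 1) ^+ p * ('X - 1) ^+ m) (p + m) ((-1) ^+ m).
Proof.
elim: p => [|p IH].
  rewrite expr0 mul1r add0n.
  elim: m => [|m IH]; first by rewrite expr0 expr0; exact: Symp1.
  rewrite [('X - 1) ^+ _]exprS [(-1) ^+ _]exprS.
  have E : ('X + (-1)%:P) = ('X - 1) :> {poly int} by rewrite polyCN polyC1.
  rewrite -[X in X * _]E.
  by apply: SympXs => //; rewrite ?sgn_sq ?mulrNN ?mulr1.
rewrite exprS -mulrA addSn.
have E : ('X + 1%:P) = ('X + 1) :> {poly int} by rewrite polyC1.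
rewrite -[X in X * _]E -[(-1) ^+ m]mul1r.
by apply: SympXs => //; rewrite ?sgn_sq ?mulr1.
Qed.

Lemma coef_sign p m k : (p + m = k.*2)%N ->
  (odd m -> (('X + 1) ^+ p * ('X - 1) ^+ m : {poly int})`_k = 0) /\
  (0 <= (-1) ^+ (m./2) * (('X + 1) ^+ p * ('X - 1) ^+ m : {poly int})`_k).
Proof.
move=> hpm; split.
  move=> om; have [h1 _] := SympPow p m.
  have := h1 k; rewrite hpm -addnn addnK => /(_ (leq_addr _ _)).
  rewrite -signr_odd om expr1 mulN1r => /eqP.
  by rewrite -addr_eq0 -mulr2n mulrn_eq0 /= => /eqP.
have [om|em] := boolP (odd m).
  have [h1 _] := SympPow p m.
  have := h1 k; rewrite hpm -addnn addnK => /(_ (leq_addr _ _)).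
  rewrite -signr_odd om expr1 mulN1r => /eqP.
  by rewrite -addr_eq0 -mulr2n mulrn_eq0 /= => /eqP ->; rewrite mulr0.
have ep : ~~ odd p.
  by move: (f_equal odd hpm); rewrite oddD odd_double (negbTE em) addbF => ->.
set a : {poly int} := ('X + 1) ^+ (p./2) * ('X - 1) ^+ (m./2).
have hk : (p./2 + m./2 = k)%N.
  move: hpm; rewrite -{1}(odd_double_half p) -{1}(odd_double_half m) (negbTE ep) (negbTE em) !add0n.
  by rewrite -doubleD => /double_inj.
have [h1 _] := SympPow (p./2) (m./2); rewrite hk in h1.
have -> : (('X + 1) ^+ p * ('X - 1) ^+ m : {poly int}) = a * a.
  rewrite /a -{1}(odd_double_half p) -{1}(odd_double_half m) (negbTE ep) (negbTE em) !add0n.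
  rewrite -!addnn !exprD; ring.
rewrite coefM mulr_sumr; apply: sumr_ge0 => [[j hj]] _ /=.
rewrite h1 -/a; last by lia.
set s := (-1) ^+ (m./2) : int.
have -> : s * (a`_j * (s * a`_j)) = (s * s) * (a`_j * a`_j) by ring.
by rewrite sgn_sq mul1r -expr2 sqr_ge0.
Qed.
Definition sel (b : bool) (x : bool * bool) := if b then x.2 else x.1.
Definition Rel (c : bool) (x x' : bool * bool) : bool :=
  (x.1 != sel c x') && (x.2 != sel (~~ c) x').
Definition psi (t x : bool * bool) : int :=
  if t.1 then (if t.2 then (if x.1 != x.2 then (if x.1 then 1 else -1) else 0)
               else (x.1 != x.2)%:R)
  else ((x.1 == t.2) && (x.2 == t.2))%:R.
Definition Cf (c : bool) (t t' : bool * bool) : int :=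
  if t.1 != t'.1 then 0 else
  if t.1 then (if t.2 == t'.2 then (if t.2 then (if c then 1 else -1) else 1) else 0)
  else (if t.2 != t'.2 then 2 else 0).

Lemma sum_pair_bool (G : bool * bool -> int) :
  \sum_(t : bool * bool) G t = G (true,true) + G (true,false) + (G (false,true) + G (false,false)).
Proof.
transitivity (\sum_(p : bool * bool) G (p.1, p.2)); first by apply: eq_bigr => -[].
rewrite -(pair_big xpredT xpredT (fun i j => G (i,j))) /= !big_bool /=.
by rewrite addrA.
Qed.

Lemma Rel_expand c x x' : (Rel c x x')%:R * 2 =
  \sum_(t : bool * bool) \sum_(t' : bool * bool) Cf c t t' * psi t x * psi t' x'.
Proof.
rewrite sum_pair_bool !sum_pair_bool.
by case: c; case: x => [[] []]; case: x' => [[] []]; vm_compute.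
Qed.

Definition psi2 (o : option (bool * bool)) x : int :=
  if o is Some t then psi t x else (x == (false, false))%:R.
Definition kap (o : option (bool * bool)) : nat :=
  match o with None => 0 | Some (false, false) => 0 | Some (false, true) => 2
  | Some (true, _) => 1 end.
Definition gpol (o : option (bool * bool)) : {poly int} :=
  \sum_(x : bool * bool) (psi2 o x)%:P * 'X^(x.1).

Lemma sum_pair_boolP (G : bool * bool -> {poly int}) :
  \sum_(t : bool * bool) G t = G (true,true) + G (true,false) + (G (false,true) + G (false,false)).
Proof.
transitivity (\sum_(p : bool * bool) G (p.1, p.2)); first by apply: eq_bigr => -[].
rewrite -(pair_big xpredT xpredT (fun i j => G (i,j))) /= !big_bool /=.
by rewrite addrA.
Qed.

Lemma kap_fact o x : psi2 o x != 0 -> (x.1 + x.2 = kap o)%N.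
Proof. by case: o => [[[] []]|]; case: x => [[] []]; vm_compute. Qed.

Lemma kap_split o : kap o = ((o == Some (false, true)).*2 + (o == Some (true, false)) + (o == Some (true, true)))%N.
Proof. by case: o => [[[] []]|]. Qed.

Lemma gpol_fact o : gpol o = 'X ^+ (o == Some (false, true)) *
   (('X + 1) ^+ (o == Some (true, false)) * ('X - 1) ^+ (o == Some (true, true))).
Proof.
rewrite /gpol sum_pair_boolP.
case: o => [[[] []]|]; rewrite /psi2 /psi /= ?polyC0 ?polyC1 ?polyCN ?mulr0n ?mulr1n ?polyC0 ?polyC1 ?expr0 ?expr1;
  try ring.
Qed.


Section Graph.
Variables (V : finType) (e : rel V) (r : V -> int) (cr : V -> V -> bool).
Hypothesis esymm : symmetric e.
Hypothesis eirr : irreflexive e.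

Definition def0 : bool * bool := (false, false).
Definition can (a : V * V) : bool := e a.1 a.2 && (enum_rank a.1 < enum_rank a.2)%N.
Definition swap (a : V * V) : V * V := (a.2, a.1).

Definition Fw (w : V) (z : {ffun V -> bool * bool}) : bool :=
  [forall v, ~~ e w v ==> (z v == def0)] &&
  [forall b, Posz #|[set v | sel b (z v)]| == r w].

Definition Qy (c : V -> V -> bool) (y : {ffun V * V -> bool * bool}) : bool :=
  [forall a, can a ==> Rel (c a.1 a.2) (y a) (y (swap a))] &&
  [forall w, Fw w [ffun v => y (w, v)]].

Definition Kc (c : V -> V -> bool) (a : V * V) (t t' : bool * bool) : int :=
  if can a then Cf (c a.1 a.2) t t' else ((t == def0) && (t' == def0))%:R.

Definition theta (t1 t2 : {ffun V * V -> bool * bool}) (a : V * V) : option (bool * bool) :=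
  if can a then Some (t1 a) else if can (swap a) then Some (t2 (swap a)) else None.

Definition psi' (o : option (bool * bool)) x : int := if o is Some t then psi t x else 1.

Definition Val (w : V) (t1 t2 : {ffun V * V -> bool * bool}) : int :=
  \sum_(z : {ffun V -> bool * bool})
     (\prod_v psi' (theta t1 t2 (w, v)) (z v)) * (Fw w z)%:R.

Definition term (c : V -> V -> bool) (t1 t2 : {ffun V * V -> bool * bool}) : int :=
  (\prod_a Kc c a (t1 a) (t2 a)) * \prod_w Val w t1 t2.

Lemma forall_prod (T : finType) (P : pred T) :
  ([forall i, P i])%:R = \prod_i (P i)%:R :> int.
Proof.
case: (boolP [forall i, P i]) => [/forallP h|].
  by rewrite big1 // => i _; rewrite h.
rewrite negb_forall => /existsP [i /negbTE hi].
by rewrite (bigD1 i) //= hi mul0r.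
Qed.

Lemma andb_mul (a b : bool) : (a && b)%:R = a%:R * b%:R :> int.
Proof. by case: a; case: b; rewrite ?mul1r ?mul0r. Qed.

Lemma can_swap a : can a -> ~~ can (swap a).
Proof.
rewrite /can /swap /= => /andP [_ h]; apply/negP => /andP [_ h'].
by move: (ltn_trans h h'); rewrite ltnn.
Qed.

Lemma swap_inj : injective swap.
Proof. by move=> [a1 a2] [b1 b2] [-> ->]. Qed.

Lemma curry_sum (G : V -> {ffun V -> bool * bool} -> int) :
  \sum_(y : {ffun V * V -> bool * bool}) \prod_w G w [ffun v => y (w, v)] =
  \prod_w \sum_(z : {ffun V -> bool * bool}) G w z.
Proof.
rewrite bigA_distr_bigA /=.
pose cu (y : {ffun V * V -> bool * bool}) : {ffun V -> {ffun V -> bool * bool}} :=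
  [ffun w => [ffun v => y (w, v)]].
pose uc (Y : {ffun V -> {ffun V -> bool * bool}}) : {ffun V * V -> bool * bool} :=
  [ffun p => Y p.1 p.2].
rewrite (reindex cu); last first.
  exists uc => [y _|Y _].
    by apply/ffunP => -[w v]; rewrite /uc /cu !ffunE.
  by apply/ffunP => w; apply/ffunP => v; rewrite /uc /cu !ffunE.
by apply: eq_bigr => y _; apply: eq_bigr => w _; rewrite /cu ffunE.
Qed.

Lemma holant c (y : {ffun V * V -> bool * bool}) :
  (Qy c y)%:R * 2 ^+ #|[set a | can a]| =
  \sum_(t1 : {ffun V * V -> bool * bool}) \sum_(t2 : {ffun V * V -> bool * bool})
     (\prod_a Kc c a (t1 a) (t2 a)) *
     (\prod_a psi' (theta t1 t2 a) (y a)) * \prod_w (Fw w [ffun v => y (w, v)])%:R.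
Proof.
rewrite /Qy andb_mul !forall_prod.
under [X in _ = X]eq_bigr => t1 _ do rewrite -mulr_suml.
rewrite -mulr_suml [_ * _ * 2 ^+ _]mulrAC; congr (_ * _).
have -> : 2 ^+ #|[set a | can a]| = \prod_a (if can a then 2 else 1) :> int.
  rewrite -big_mkcond /=.
  rewrite (eq_bigl (fun a => a \in [set a | can a])) ?prodr_const // => a.
  by rewrite inE.
rewrite -big_split /=.
pose K' a t t' : int := if can a then Cf (c a.1 a.2) t t' * psi t (y a) * psi t' (y (swap a))
                     else ((t == def0) && (t' == def0))%:R.
transitivity (\prod_a \sum_(t : bool * bool) \sum_(t' : bool * bool) K' a t t').
  apply: eq_bigr => a _; rewrite /K'; case: (can a) => /=.
    by rewrite Rel_expand.
  by rewrite sum_pair_bool !sum_pair_bool; vm_compute.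
rewrite bigA_distr_bigA; apply: eq_bigr => t1 _.
rewrite bigA_distr_bigA; apply: eq_bigr => t2 _.
pose L a : int := if can a then psi (t1 a) (y a) * psi (t2 a) (y (swap a)) else 1.
transitivity (\prod_a (Kc c a (t1 a) (t2 a) * L a)).
  apply: eq_bigr => a _; rewrite /K' /Kc /L; case: (can a) => //.
    by rewrite mulrA.
  by rewrite mulr1.
rewrite big_split /=; congr (_ * _).
transitivity (\prod_a ((if can a then psi (t1 a) (y a) else 1) *
                       (if can a then psi (t2 a) (y (swap a)) else 1))).
  by apply: eq_bigr => a _; rewrite /L; case: (can a); rewrite ?mulr1.
rewrite big_split /= [X in _ * X](reindex_inj swap_inj) /=.
rewrite -big_split /=; apply: eq_bigr => a _.
have -> : swap (swap a) = a by case: a.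
rewrite /theta; case: (boolP (can a)) => ha.
  by rewrite (negbTE (can_swap ha)) mulr1.
by rewrite mul1r; case: (can (swap a)).
Qed.

Lemma Zexp c :
  (#|[set y | Qy c y]|%:R : int) * 2 ^+ #|[set a | can a]| =
  \sum_(t1 : {ffun V * V -> bool * bool}) \sum_(t2 : {ffun V * V -> bool * bool}) term c t1 t2.
Proof.
rewrite -sum1_card natr_sum mulr_suml.
rewrite big_mkcond /=.
rewrite (eq_bigr (fun y => (Qy c y)%:R * 2 ^+ #|[set a | can a]|)); last first.
  by move=> y _; rewrite inE; case: (Qy c y); rewrite ?mul0r.
under eq_bigr => y _ do rewrite holant.
rewrite exchange_big /=; apply: eq_bigr => t1 _.
rewrite exchange_big /=; apply: eq_bigr => t2 _.
rewrite /term.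
under eq_bigr => y _ do rewrite -mulrA.
rewrite -mulr_sumr; congr (_ * _).
rewrite -curry_sum; apply: eq_bigr => y _.
rewrite big_split /=; congr (_ * _).
transitivity (\prod_(p : V * V) psi' (theta t1 t2 (p.1, p.2)) (y (p.1, p.2))).
  by apply: eq_bigr => -[].
rewrite -(pair_big xpredT xpredT (fun w v => psi' (theta t1 t2 (w, v)) (y (w, v)))) /=.
apply: eq_bigr => w _; apply: eq_bigr => v _; by rewrite ffunE.
Qed.


Lemma card_sum (T : finType) (P : pred T) : #|[set v | P v]| = \sum_v (P v : nat).
Proof. by rewrite -sum1_card big_mkcond /=; apply: eq_bigr => v _; rewrite inE; case: (P v). Qed.

Lemma forall_bool (P : pred bool) : [forall b, P b] = P false && P true.
Proof. by apply/forallP/andP => [h|[h1 h2] []//]; split. Qed.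

Lemma Val_sign (w : V) (th : V -> option (bool * bool))
  (hth : forall v, (th v == None) = ~~ e w v) :
  let Vl := \sum_(z : {ffun V -> bool * bool}) (\prod_v psi' (th v) (z v)) * (Fw w z)%:R in
  let m := (\sum_v (th v == Some (true, true) : nat))%N in
  (Vl != 0 -> ~~ odd m) /\ 0 <= (-1) ^+ (m./2) * Vl.
Proof.
move=> Vl m.
pose W (z : {ffun V -> bool * bool}) := \prod_v psi2 (th v) (z v).
pose n1 (z : {ffun V -> bool * bool}) := (\sum_v ((z v).1 : nat))%N.
pose n2 (z : {ffun V -> bool * bool}) := (\sum_v ((z v).2 : nat))%N.
have E1 : Vl = \sum_z W z * ([forall b, Posz #|[set v | sel b (z v)]| == r w])%:R.
  apply: eq_bigr => z _; rewrite /Fw andb_mul forall_prod mulrA; congr (_ * _).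
  rewrite -big_split /=; apply: eq_bigr => v _.
  have := hth v; case: (th v) => [t|] /=.
    by move/esym/negbFE => ->; rewrite mulr1.
  by move/esym => ->; rewrite mul1r.
case E: (r w) => [rn|rn]; last first.
  suff -> : Vl = 0 by rewrite eqxx mulr0.
  by rewrite E1 big1 // => z _; rewrite forall_bool E andFb mulr0.
pose K := (\sum_v kap (th v))%N.
have E2 : Vl = (K == rn.*2)%:R * \sum_z W z * (n1 z == rn)%:R.
  rewrite E1 mulr_sumr; apply: eq_bigr => z _.
  rewrite forall_bool E /= !card_sum -/(n1 z) -/(n2 z).
  have [Wz|Wz] := eqVneq (W z) 0; first by rewrite Wz !mul0r mulr0.
  have hK : (n1 z + n2 z = K)%N.
    rewrite /n1 /n2 /K -big_split /=; apply: eq_bigr => v _; apply: kap_fact.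
    by move/prodf_neq0: Wz; apply.
  rewrite mulrCA; congr (_ * _); rewrite -andb_mul; congr (_ %:R); congr nat_of_bool.
  by apply/idP/idP => /andP [/eqP h1 /eqP h2]; apply/andP; split; apply/eqP; lia.
pose D := (\sum_v (th v == Some (false, true) : nat))%N.
pose p := (\sum_v (th v == Some (true, false) : nat))%N.
have EK : K = (D.*2 + p + m)%N.
  rewrite /K (eq_bigr _ (fun v _ => kap_split (th v))) !big_split /=.
  by rewrite (big_morph double doubleD double0).
have EP : \sum_z W z * (n1 z == rn)%:R =
    ('X ^+ D * (('X + 1) ^+ p * ('X - 1) ^+ m) : {poly int})`_rn.
  have -> : ('X ^+ D * (('X + 1) ^+ p * ('X - 1) ^+ m) : {poly int}) = \prod_v gpol (th v).
    rewrite /D /p /m -!prodrXr -!big_split /=.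
    by apply: eq_bigr => v _; rewrite gpol_fact.
  rewrite /gpol bigA_distr_bigA coef_sum; apply: eq_bigr => z _.
  rewrite big_split /= prodrXr -rmorph_prod coefCM coefXn.
  by rewrite eq_sym.
rewrite E2 EP EK.
have [hK|hK] := eqVneq (D.*2 + p + m)%N rn.*2; last first.
  by rewrite /= mulr0n mul0r mulr0 eqxx; split.
rewrite /= mulr1n mul1r coefXnM ifF; last by apply/negbTE; rewrite -leqNgt; lia.
have hpm : (p + m = (rn - D).*2)%N by lia.
have [c1 c2] := coef_sign hpm; split => // hne.
by apply/negP => om; move: hne; rewrite c1 // eqxx.
Qed.
Lemma Kc_sg c a t t' : Kc c a t t' =
  Kc (fun _ _ => false) a t t' * (if can a && c a.1 a.2 && (t == (true, true)) then -1 else 1).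
Proof.
rewrite /Kc; case: (can a); last by rewrite /= mulr1.
by case: (c a.1 a.2); case: t => [[] []]; case: t' => [[] []]; vm_compute.
Qed.

Lemma Cf_cons t t' : Cf false t t' != 0 -> (t == (true, true)) = (t' == (true, true)).
Proof. by case: t => [[] []]; case: t' => [[] []]; vm_compute. Qed.

Lemma Cf_sign t t' : Cf false t t' != 0 -> 0 <= (-1) ^+ (t == (true, true)) * Cf false t t'.
Proof. by case: t => [[] []]; case: t' => [[] []]; vm_compute. Qed.

Lemma theta_none t1 t2 w v : (theta t1 t2 (w, v) == None) = ~~ e w v.
Proof.
rewrite /theta /can /swap /=.
case: (boolP (e w v)) => hwv; last by rewrite esymm (negbTE hwv).
rewrite esymm hwv /=.
have hne : enum_rank w != enum_rank v.
  apply/negP => /eqP /enum_rank_inj hw; move: hwv; rewrite hw.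
  by rewrite eirr.
by case: (ltngtP (enum_rank w) (enum_rank v)) => // /val_inj h; rewrite h eqxx in hne.
Qed.

Lemma term0_ge0 t1 t2 : 0 <= term (fun _ _ => false) t1 t2.
Proof.
rewrite /term.
set P := \prod_a _; set Q := \prod_w _.
have [P0|P0] := eqVneq P 0; first by rewrite P0 mul0r.
have [Q0|Q0] := eqVneq Q 0; first by rewrite Q0 mulr0.
have hK : forall a, Kc (fun _ _ => false) a (t1 a) (t2 a) != 0.
  by move=> a; move/prodf_neq0: P0; apply.
have hV : forall w, Val w t1 t2 != 0.
  by move=> w; move/prodf_neq0: Q0; apply.
have cons : forall a, can a -> (t1 a == (true, true)) = (t2 a == (true, true)).
  by move=> a ca; apply: Cf_cons; move: (hK a); rewrite /Kc ca.
pose Mc := (\sum_a (can a && (t1 a == (true, true)) : nat))%N.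
have sP : 0 <= (-1) ^+ Mc * P.
  rewrite /Mc -prodrXr -big_split /=; apply: prodr_ge0 => a _.
  move: (hK a); rewrite /Kc; case: (boolP (can a)) => ca /=; first exact: Cf_sign.
  by rewrite expr0 mul1r => _; case: (_ && _).
pose mw w := (\sum_v (theta t1 t2 (w, v) == Some (true, true) : nat))%N.
have hw : forall w, ~~ odd (mw w) /\ 0 <= (-1) ^+ ((mw w)./2) * Val w t1 t2.
  move=> w; have [h1 h2] := Val_sign (theta_none t1 t2 w).
  by split => //; apply: h1; exact: hV.
have sumw : (\sum_w mw w = Mc.*2)%N.
  rewrite /mw (pair_big xpredT xpredT (fun w v => (theta t1 t2 (w, v) == Some (true, true) : nat))) /=.
  transitivity (\sum_(a : V * V) ((can a && (t1 a == (true, true)) : nat) +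
                 (can (swap a) && (t2 (swap a) == (true, true)) : nat)))%N.
    apply: eq_bigr => -[w v] _ /=; rewrite /theta.
    case: (boolP (can (w, v))) => ca /=.
      by rewrite (negbTE (can_swap ca)) addn0.
    by case: (can (swap (w, v))).
  rewrite big_split /= [X in (_ + X)%N](reindex_inj swap_inj) /= -addnn; congr (_ + _)%N.
  apply: eq_bigr => a _; have -> : swap (swap a) = a by case: a.
  by case: (boolP (can a)) => ca //=; rewrite cons.
have sQ : 0 <= (-1) ^+ Mc * Q.
  have -> : Mc = (\sum_w (mw w)./2)%N.
    apply: double_inj; rewrite -sumw (big_morph double doubleD double0).
    apply: eq_bigr => w _; have [ev _] := hw w.
    by rewrite -{1}(odd_double_half (mw w)) (negbTE ev) add0n.
  rewrite -prodrXr -big_split /=; apply: prodr_ge0 => w _.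
  by have [_ ?] := hw w.
have := mulr_ge0 sP sQ.
by rewrite mulrACA sgn_sq mul1r.
Qed.

Lemma term_le c t1 t2 : term c t1 t2 <= term (fun _ _ => false) t1 t2.
Proof.
set sg := fun a => (if can a && c a.1 a.2 && (t1 a == (true, true)) then -1 else 1) : int.
have -> : term c t1 t2 = (\prod_a sg a) * term (fun _ _ => false) t1 t2.
  rewrite /term mulrA; congr (_ * _).
  by rewrite -big_split /=; apply: eq_bigr => a _; rewrite Kc_sg mulrC.
have n1 : `|\prod_a sg a| = 1.
  rewrite (big_morph _ (@normrM _) (@normr1 _)) big1 // => a _.
  by rewrite /sg; case: (_ && _); rewrite ?normrN normr1.
apply: le_trans (ler_norm _) _.
by rewrite normrM n1 mul1r ger0_norm // term0_ge0.
Qed.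

Lemma can_or u v : e u v -> can (u, v) || can (v, u).
Proof.
move=> huv; have := theta_none [ffun => def0] [ffun => def0] u v.
rewrite huv /theta /swap /=; case: (can (u, v)) => //; by case: (can (v, u)).
Qed.

Definition hcv (c : V -> V -> bool) (x y : V * bool) : bool :=
  e x.1 y.1 && (y.2 == x.2 (+) c x.1 y.1).

Lemma orP1 (h : rel (V * bool)) d x y : is_orientation h d -> d (x, y) -> h x y.
Proof. by move=> /forallP /(_ x) /forallP /(_ y) /andP [/implyP h1 _]. Qed.

Lemma orP2 (h : rel (V * bool)) d x y : is_orientation h d -> h x y -> d (x, y) != d (y, x).
Proof. by move=> /forallP /(_ x) /forallP /(_ y) /andP [_ /implyP h2]. Qed.

Lemma pair_eq_sel (x x' : bool * bool) : (forall b, sel b x = sel b x') -> x = x'.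
Proof. by case: x x' => [a b] [a' b'] h; have := h false; have := h true => /= -> ->. Qed.

Lemma RelP k x x' : Rel k x x' = [forall b, sel b x != sel (b (+) k) x'].
Proof. by rewrite forall_bool /Rel; case: k. Qed.

Lemma card_bij (T1 T2 : finType) (P1 : pred T1) (P2 : pred T2) (f : T1 -> T2) (g : T2 -> T1) :
  (forall x, P1 x -> P2 (f x)) -> (forall y, P2 y -> P1 (g y)) ->
  (forall x, P1 x -> g (f x) = x) -> (forall y, P2 y -> f (g y) = y) ->
  #|[set x | P1 x]| = #|[set y | P2 y]|.
Proof.
move=> hf hg hgf hfg; apply/eqP; rewrite eqn_leq; apply/andP; split.
  rewrite -(card_in_imset (f := f)); last first.
    by move=> x1 x2; rewrite !inE => h1 h2 e12; rewrite -(hgf _ h1) e12 hgf.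
  apply: subset_leq_card; apply/subsetP => y /imsetP [x]; rewrite !inE => px ->.
  exact: hf.
rewrite -(card_in_imset (f := g)); last first.
  by move=> x1 x2; rewrite !inE => h1 h2 e12; rewrite -(hfg _ h1) e12 hfg.
apply: subset_leq_card; apply/subsetP => y /imsetP [x]; rewrite !inE => px ->.
exact: hg.
Qed.

Section Bij.
Variable c : V -> V -> bool.
Hypothesis csym : forall u v, c u v = c v u.

Definition fdy (d : {ffun (V * bool) * (V * bool) -> bool}) : {ffun V * V -> bool * bool} :=
  [ffun a => (d ((a.2, false (+) c a.1 a.2), (a.1, false)),
              d ((a.2, true (+) c a.1 a.2), (a.1, true)))].
Definition gyd (y : {ffun V * V -> bool * bool}) : {ffun (V * bool) * (V * bool) -> bool} :=
  [ffun p => hcv c p.1 p.2 && sel p.2.2 (y (p.2.1, p.1.1))].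

Lemma sel_fdy d u v b : sel b (fdy d (u, v)) = d ((v, b (+) c u v), (u, b)).
Proof. by case: b; rewrite ffunE. Qed.

Lemma xorK3 b k : b (+) k (+) k = b.
Proof. by case: b; case: k. Qed.

Lemma hcv_eq v c1 u b : hcv c (v, c1) (u, b) = e u v && (c1 == b (+) c u v).
Proof.
rewrite /hcv /= esymm csym; congr (_ && _).
by case: b; case: c1; case: (c u v).
Qed.

Lemma indeg_eq d u b : is_orientation (hcv c) d ->
  indeg d (u, b) = #|[set v | d ((v, b (+) c u v), (u, b))]|.
Proof.
move=> od; rewrite /indeg.
rewrite -(card_imset _ (f := fun v => (v, b (+) c u v))); last by move=> v1 v2 [].
apply: eq_card => -[v c1]; rewrite inE; apply/idP/imsetP.
  move=> hd; have := orP1 od hd; rewrite hcv_eq => /andP [_ /eqP hc1]; subst c1.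
  by exists v; rewrite ?inE.
by move=> [v' ]; rewrite inE => hv [-> ->].
Qed.

Definition Pd (d : {ffun (V * bool) * (V * bool) -> bool}) : bool :=
  is_orientation (hcv c) d && [forall v, Posz (indeg d v) == lift_vec r v].

Lemma Pd_Qy d : Pd d -> Qy c (fdy d).
Proof.
move=> /andP [od /forallP hdeg]; apply/andP; split.
  apply/forallP => -[u v]; apply/implyP => /andP /= [huv _].
  rewrite RelP; apply/forallP => b.
  rewrite sel_fdy /swap /= sel_fdy csym xorK3.
  by apply: orP2 od _; rewrite hcv_eq huv (csym u v) eqxx.
apply/forallP => w; apply/andP; split.
  apply/forallP => v; apply/implyP => hwv; rewrite ffunE.
  apply/eqP/pair_eq_sel => b; rewrite sel_fdy.
  have -> : sel b def0 = false by case: b.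
  by apply/negbTE/negP => /(orP1 od); rewrite hcv_eq (negbTE hwv).
apply/forallP => b.
have := hdeg (w, b); rewrite indeg_eq // /lift_vec /=.
suff -> : #|[set v | sel b ([ffun v => fdy d (w, v)] v)]| =
          #|[set v | d ((v, b (+) c w v), (w, b))]| by [].
by apply: eq_card => v; rewrite !inE ffunE sel_fdy.
Qed.

Lemma Qy_Pd y : Qy c y -> Pd (gyd y).
Proof.
move=> /andP [/forallP hc /forallP hF].
have od : is_orientation (hcv c) (gyd y).
  apply/forallP => -[v c1]; apply/forallP => -[u b]; apply/andP; split.
    by apply/implyP; rewrite ffunE => /andP [].
  apply/implyP; rewrite hcv_eq => /andP [huv /eqP hc1]; subst c1.
  rewrite !ffunE /= !hcv_eq huv esymm huv (csym v u) xorK3 !eqxx /=.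
  have := can_or huv; case/orP => hcan.
    have := hc (u, v); rewrite hcan /= RelP => /forallP /(_ b).
    by rewrite /swap /=.
  have := hc (v, u); rewrite hcan /= RelP => /forallP /(_ (b (+) c u v)).
  by rewrite /swap /= (csym v u) xorK3 eq_sym.
apply/andP; split => //; apply/forallP => -[u b].
rewrite indeg_eq // /lift_vec /=.
have /andP [/forallP hdef /forallP hdeg] := hF u.
suff -> : #|[set v | gyd y (v, b (+) c u v, (u, b))]| =
          #|[set v | sel b ([ffun v => y (u, v)] v)]| by exact: hdeg.
apply: eq_card => v; rewrite !inE !ffunE /=.
rewrite hcv_eq eqxx andbT.
case: (boolP (e u v)) => // huv.
by have := hdef v; rewrite huv ffunE /= => /eqP ->; case: b.
Qed.

Lemma gfK d : Pd d -> gyd (fdy d) = d.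
Proof.
move=> /andP [od _]; apply/ffunP => -[[v c1] [u b]]; rewrite ffunE /= sel_fdy.
case: (boolP (hcv c (v, c1) (u, b))) => hh /=.
  by move: hh; rewrite hcv_eq => /andP [_ /eqP ->].
by apply/esym/negP => /(orP1 od); rewrite (negbTE hh).
Qed.

Lemma fgK y : Qy c y -> fdy (gyd y) = y.
Proof.
move=> /andP [_ /forallP hF]; apply/ffunP => -[u v]; apply/pair_eq_sel => b.
rewrite sel_fdy ffunE /= hcv_eq eqxx andbT.
case: (boolP (e u v)) => // huv.
have /andP [/forallP hdef _] := hF u.
by have := hdef v; rewrite huv ffunE /= => /eqP ->; case: b.
Qed.

Lemma eps_Qy : eps (hcv c) (lift_vec r) = #|[set y | Qy c y]|.
Proof.
apply: (card_bij (f := fdy) (g := gyd)).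
- exact: Pd_Qy.
- exact: Qy_Pd.
- exact: gfK.
- exact: fgK.
Qed.

End Bij.

End Graph.

Lemma eps_ext (T : finType) (h h' : rel T) r : (forall x y, h x y = h' x y) -> eps h r = eps h' r.
Proof.
move=> hh; rewrite /eps; apply: eq_card => d; rewrite !inE /is_orientation.
congr (_ && _); apply: eq_forallb => x; apply: eq_forallb => y; by rewrite hh.
Qed.


Unset Implicit Arguments.

Theorem theorem1p7 (V : finType) (e : rel V) (r : V -> int)
    (h : rel (V * bool)) :
  simple_graph e -> is_two_cover e h ->
  (eps h (lift_vec r) <= eps (two_copies e) (lift_vec r))%N.
Proof.
move=> [esym eirr] [hsym [hE hcov]].
pose cr u v := h (u, false) (v, true).
have hne : forall x y, ~~ e x.1 y.1 -> h x y = false.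
  by move=> x y hxy; apply/negP => /hE; rewrite (negbTE hxy).
have crsym : forall u v, cr u v = cr v u.
  move=> u v; rewrite /cr [RHS]hsym.
  case: (boolP (e u v)) => huv; last by rewrite !hne.
  by have := hcov u v huv; case: (h (u, false) (v, true)); case: (h (u, true) (v, false));
     rewrite ?andbF ?andFb ?andbT.
have hh : forall x y, h x y = hcv e cr x y.
  move=> [u b] [v c'] /=; rewrite /hcv /=.
  case: (boolP (e u v)) => huv /=; last by rewrite hne.
  rewrite /cr; have := hcov u v huv.
  case: b; case: c';
  case: (h (u, false) (v, false)); case: (h (u, true) (v, true));
  case: (h (u, false) (v, true)); case: (h (u, true) (v, false)) => //=.
have h2 : forall x y, two_copies e x y = hcv e (fun _ _ => false) x y.
  by move=> x y; rewrite /two_copies /hcv addbF eq_sym.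
rewrite (eps_ext _ hh) (eps_ext _ h2).
rewrite (eps_Qy r esym eirr crsym) (eps_Qy r esym eirr (c := fun _ _ => false)) //.
have := Zexp e r cr; have := Zexp e r (fun _ _ => false).
move=> E0 E1.
have : (#|[set y | Qy e r cr y]|%:R : int) * 2 ^+ #|[set a | can e a]| <=
       (#|[set y | Qy e r (fun _ _ => false) y]|%:R : int) * 2 ^+ #|[set a | can e a]|.
  rewrite E0 E1; apply: ler_sum => t1 _; apply: ler_sum => t2 _.
  exact: term_le.
by rewrite ler_pM2r ?exprn_gt0 // ler_nat.
Qed.
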